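(* For all positive integers $N_1,N_2,q,r$ with $q> r\geq 1$, we have $f_{q,r}(N_1)f_{q,r}(N_2)\geq f_{q,r}(N_1N_2)$.
   Context: For a $q$-edge-colored complete graph $K$ on vertex set $[N]$ with its natural order, $f_{q,r}(K)$ is the maximum number of vertices of a monotone path (vertices strictly increasing in traversal order) in $K$ whose edges use at most $r$ colors; $f_{q,r}(N)$ is the minimum of $f_{q,r}(K)$ over all such $q$-edge-colored $K$ on $N$ vertices. *)

(* Defs.v *)
From mathcomp Require Import all_boot.
Set Implicit Arguments. Unset Strict Implicit. Unset Printing Implicit Defensive.

(* A q-edge-coloring of the complete graph on vertex set 'I_N (= [N] with its
   natural order).  The color of the edge {x,y} with x < y is c (x, y); values
   c (x, y) with x >= y are irrelevant (never used). *)
Definition coloring (N q : nat) := {ffun 'I_N * 'I_N -> 'I_q}.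

Definition path_colors N q (c : coloring N q) (s : seq 'I_N) : {set 'I_q} :=
  [set c p | p in zip s (behead s)].

Definition good_path N q r (c : coloring N q) (s : seq 'I_N) : bool :=
  sorted (fun x y : 'I_N => x < y) s && (#|path_colors c s| <= r).

(* A strictly increasing vertex sequence is the increasing enumeration of
   its vertex set; enum S for S : {set 'I_N} is increasing. *)
Definition fK N q r (c : coloring N q) : nat :=
  \max_(S : {set 'I_N} | good_path r c (enum S)) #|S|.

(* f_{q,r}(N): minimum of fK over all q-colorings (bounded by N, the seed). *)
Definition f (q r N : nat) : nat :=
  \big[minn/N]_(c : coloring N q) fK r c.

(* Main.v *)
Require Import Defs.
From mathcomp Require Import all_boot zify.

Lemma enum_sorted N (S : {set 'I_N}) : sorted (fun x y : 'I_N => x < y) (enum S).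
Proof.
have h : sorted (fun x y : 'I_N => x < y) (enum 'I_N).
  by have := iota_ltn_sorted 0 N; rewrite -val_enum_ord sorted_map.
rewrite /enum_mem -enumT. apply: sorted_filter => //.
move=> a b d; exact: ltn_trans.
Qed.

Lemma consecP N (s : seq 'I_N) (x y : 'I_N) :
  sorted (fun x y : 'I_N => x < y) s ->
  ((x, y) \in zip s (behead s) <->
   [/\ x \in s, y \in s, x < y & forall z, z \in s -> ~~ ((x < z) && (z < y))]).
Proof.
elim: s => [|a t IH] /=.
  by split => // -[].
case: t IH => [|b t] IH /=.
  move=> _; split => // -[]; rewrite !inE => /eqP -> /eqP ->; by rewrite ltnn.
move=> /andP[ab pt].
have allb : all (fun z : 'I_N => b < z) t.
  by apply: (order_path_min (leT := fun x y : 'I_N => x < y)) => // u v w; apply: ltn_trans.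
have IH' := IH pt.
rewrite in_cons; split.
  case/orP.
    move/eqP=> [-> ->]; split; rewrite ?inE ?eqxx ?orbT //.
    move=> z; rewrite !inE; case/or3P => [/eqP->|/eqP->|zt]; rewrite ?ltnn ?andbF //.
    by have := allP allb z zt => bz; rewrite (ltnNge z b) (ltnW bz) andbF.
  move/IH' => [xs ys xy H]; split => //; try by rewrite in_cons ?xs ?ys orbT.
  move=> z; rewrite in_cons => /orP[/eqP->|]; last exact: H.
  move: xs; rewrite in_cons => /orP[/eqP->|xt]; first by rewrite ltnNge (ltnW ab).
  have := allP allb x xt => bx; apply/negP => /andP[xa _]. 
  have : a < x by apply: ltn_trans bx. by rewrite ltnNge ltnW.
move=> [xs ys xy H].
move: xs; rewrite inE => /orP[/eqP xa|xbt].
  subst x; apply/orP; left.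
  move: ys; rewrite !inE => /or3P[/eqP ya|/eqP->|yt] //.
    by subst y; rewrite ltnn in xy.
  have := H b; rewrite !inE eqxx orbT ab /= => /(_ isT).
  by have := allP allb y yt => ->.
apply/orP; right; apply/IH'; split => //.
  move: ys; rewrite inE => /orP[/eqP ya|//].
  subst y; move: xbt; rewrite inE => /orP[/eqP xb|xt].
    by subst x; move: (ltn_trans xy ab); rewrite ltnn.
  have := allP allb x xt => bx.
  by have := ltn_trans (ltn_trans xy ab) bx; rewrite ltnn.
by move=> z zs; apply: H; rewrite inE zs orbT.
Qed.

Section Prod.
Variables N1 N2 : nat.

Lemma hi_proof (v : 'I_(N1 * N2)) : v %/ N2 < N1.
Proof.
case: N2 v => [|n] v; first by case: v => m; rewrite muln0.
by rewrite ltn_divLR.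
Qed.

Lemma lo_proof (v : 'I_(N1 * N2)) : v %% N2 < N2.
Proof.
case: N2 v => [|n] v; first by case: v => m; rewrite muln0.
by rewrite ltn_pmod.
Qed.

Lemma pr_proof (i : 'I_N1) (j : 'I_N2) : i * N2 + j < N1 * N2.
Proof.
case: i j => i hi [j hj] /=.
have : (i.+1) * N2 <= N1 * N2 by apply: leq_mul.
rewrite mulSn; lia.
Qed.

Definition hi (v : 'I_(N1 * N2)) : 'I_N1 := Ordinal (hi_proof v).
Definition lo (v : 'I_(N1 * N2)) : 'I_N2 := Ordinal (lo_proof v).
Definition pr (i : 'I_N1) (j : 'I_N2) : 'I_(N1 * N2) := Ordinal (pr_proof i j).

Lemma hiK i j : hi (pr i j) = i.
Proof.
apply: val_inj => /=. case: j => j hj /=.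
have n2 : 0 < N2 by case: (N2) hj.
by rewrite divnMDl // divn_small // addn0.
Qed.

Lemma loK i j : lo (pr i j) = j.
Proof.
apply: val_inj => /=. case: j => j hj /=.
by rewrite modnMDl modn_small.
Qed.

Lemma prK v : pr (hi v) (lo v) = v.
Proof. by apply: val_inj => /=; rewrite -divn_eq. Qed.

Lemma hi_mono (u v : 'I_(N1 * N2)) : u <= v -> hi u <= hi v.
Proof. exact: leq_div2r. Qed.

Lemma hi_lt (u v : 'I_(N1 * N2)) : hi u < hi v -> u < v.
Proof. by move=> h; rewrite ltnNge; apply/negP => /hi_mono; rewrite leqNgt h. Qed.

Lemma same_lt (u v : 'I_(N1 * N2)) : hi u = hi v -> (u < v) = (lo u < lo v).
Proof.
move=> e; have ev : u %/ N2 = v %/ N2 by move: e => /(congr1 val).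
rewrite /= {1}(divn_eq u N2) {1}(divn_eq v N2) ev ltn_add2l //.
Qed.

Variables (q : nat) (c1 : coloring N1 q) (c2 : coloring N2 q).

Definition cprod : coloring (N1 * N2) q :=
  [ffun p => if hi p.1 == hi p.2 then c2 (lo p.1, lo p.2) else c1 (hi p.1, hi p.2)].


Lemma fK_prod r : fK r cprod <= fK r c1 * fK r c2.
Proof.
apply/bigmax_leqP => S /andP[_ HS].
set I := [set hi v | v in S].
set J := fun i => [set j | pr i j \in S].
have colS : forall u v, u \in S -> v \in S -> u < v ->
    (forall z, z \in S -> ~~ ((u < z) && (z < v))) ->
    cprod (u, v) \in path_colors cprod (enum S).
  move=> u v uS vS uv H; apply/imsetP; exists (u, v) => //.
  apply/consecP; first exact: enum_sorted.
  by split; rewrite ?mem_enum // => z; rewrite mem_enum; exact: H.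
have goodI : good_path r c1 (enum I).
  apply/andP; split; first exact: enum_sorted.
  apply: leq_trans HS; apply: subset_leq_card; apply/subsetP => k /imsetP[[i i'] /consecP].
  case/(_ (enum_sorted _ _)); rewrite !mem_enum => iI i'I ii' H ->.
  case/imsetP: iI => u0 u0S hu0.
  case/imsetP: i'I => v0 v0S hv0.
  case: (@arg_maxnP _ u0 (fun u => (u \in S) && (hi u == i)) val); first by rewrite u0S hu0 eqxx.
  move=> u /andP[uS /eqP hu] umax.
  case: (@arg_minnP _ v0 (fun u => (u \in S) && (hi u == i')) val); first by rewrite v0S hv0 eqxx.
  move=> v /andP[vS /eqP hv] vmin.
  have ne : (i == i') = false by apply/negbTE; apply/eqP => e; rewrite e ltnn in ii'.
  have -> : c1 (i, i') = cprod (u, v) by rewrite /cprod ffunE /= hu hv ne.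
  apply: colS => //; first by apply: hi_lt; rewrite hu hv.
  move=> z zS; apply/negP => /andP[uz zv].
  have h1 : i <= hi z by rewrite -hu; apply: hi_mono; apply: ltnW.
  have h2 : hi z <= i' by rewrite -hv; apply: hi_mono; apply: ltnW.
  case: (eqVneq (hi z) i) => [ezi|nzi].
    by have := umax z; rewrite zS ezi eqxx => /(_ isT) /=; rewrite leqNgt uz.
  case: (eqVneq (hi z) i') => [ezi'|nzi'].
    by have := vmin z; rewrite zS ezi' eqxx => /(_ isT) /=; rewrite leqNgt zv.
  have a1 : i < hi z by rewrite ltn_neqAle h1 andbT eq_sym.
  have a2 : hi z < i' by rewrite ltn_neqAle h2 andbT.
  by have := H (hi z); rewrite mem_enum (imset_f _ zS) a1 a2 => /(_ isT).
have goodJ : forall i, good_path r c2 (enum (J i)).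
  move=> i; apply/andP; split; first exact: enum_sorted.
  apply: leq_trans HS; apply: subset_leq_card; apply/subsetP => k /imsetP[[j j'] /consecP].
  case/(_ (enum_sorted _ _)); rewrite !mem_enum !inE => jJ j'J jj' H ->.
  have -> : c2 (j, j') = cprod (pr i j, pr i j') by rewrite /cprod ffunE /= !hiK !loK eqxx.
  apply: colS => //; first by rewrite same_lt ?hiK // !loK.
  move=> z zS; apply/negP => /andP[uz zv].
  have hz : hi z = i.
    have a1 := hi_mono _ _ (ltnW uz); have a2 := hi_mono _ _ (ltnW zv).
    rewrite !hiK in a1 a2; apply: val_inj; apply/eqP; by rewrite eqn_leq a1 a2.
  have e1 : j < lo z by rewrite -(loK i j) -same_lt ?hiK ?hz.
  have e2 : lo z < j' by rewrite -(loK i j') -same_lt ?hiK ?hz.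
  by have := H (lo z); rewrite mem_enum inE -hz prK zS e1 e2 => /(_ isT).
have cardI : #|I| <= fK r c1 by rewrite /fK; apply: (leq_bigmax_cond I).
have cardJ : forall i, #|J i| <= fK r c2.
  by move=> i; rewrite /fK; apply: (leq_bigmax_cond (J i)).
rewrite -sum1_card (partition_big hi (mem I)) /=; last by move=> v vS; apply: imset_f.
apply: (@leq_trans (\sum_(i in I) fK r c2)).
  apply: leq_sum => i iI.
  rewrite sum1dep_card; apply: leq_trans (cardJ i).
  apply: (@leq_trans #|[set pr i j | j in J i]|); last exact: leq_imset_card.
  apply: subset_leq_card; apply/subsetP => v; rewrite inE => /andP[vS /eqP hv].
  apply/imsetP; exists (lo v); first by rewrite inE -hv prK.
  by rewrite -hv prK.
by rewrite sum_nat_const leq_mul.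
Qed.

End Prod.

Lemma f_le q r N (c : coloring N q) : f q r N <= fK r c.
Proof.
rewrite /f; have : c \in index_enum (coloring N q) by rewrite mem_index_enum.
elim: (index_enum _) => [|a s IH] //; rewrite big_cons in_cons.
case/orP => [/eqP ->|/IH h]; first exact: geq_minl.
by apply: leq_trans h; exact: geq_minr.
Qed.

Lemma fK_leN q r N (c : coloring N q) : fK r c <= N.
Proof.
apply/bigmax_leqP => S _.
by apply: leq_trans (max_card _) _; rewrite card_ord.
Qed.

Lemma f_ex q r N : 0 < q -> exists c : coloring N q, fK r c <= f q r N.
Proof.
case: q => // q' _.
pose c0 : coloring N q'.+1 := [ffun _ => ord0].
rewrite /f; apply: (big_ind (fun x => exists c : coloring N q'.+1, fK r c <= x)).
- by exists c0; apply: fK_leN.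
- move=> x y [cx hx] [cy hy]; case: (leqP x y) => h.
    by exists cx.
  by exists cy.
- by move=> c _; exists c.
Qed.

Theorem corollary3p4 (N1 N2 q r : nat) :
  0 < N1 -> 0 < N2 -> 0 < q -> 0 < r -> r < q ->
  f q r (N1 * N2) <= f q r N1 * f q r N2.
Proof.
move=> _ _ hq _ _.
have [c1 h1] := f_ex _ r N1 hq.
have [c2 h2] := f_ex _ r N2 hq.
apply: leq_trans (f_le _ r _ (cprod _ _ _ c1 c2)) _.
apply: leq_trans (fK_prod _ _ _ c1 c2 r) _.
exact: leq_mul.
Qed.
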